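(* Let $k\in\mathbb{N}$ and let $\ell\colon(0,\infty)\to[0,\infty)$ be continuously differentiable on its open support $\operatorname{supp}\ell$ with $\ell'(t)<0$ for all $t\in\operatorname{supp}\ell$. Define $\psi\colon\operatorname{supp}\ell\to\mathbb{R}$ by $\psi(t)=\dfrac{t\,\ell'(t)}{\ell(t)^{1-1/k}}$. Then $\ell\in\Lambda_k$ if and only if $\psi$ is decreasing.
   Context: $\operatorname{supp}\ell=(0,\sup\{t>0:\ell(t)>0\})$. The class $\Lambda_k$ ($k\in\mathbb{N}$) consists of all continuous $\ell\colon(0,\infty)\to[0,\infty]$ such that (i) $\ell$ is strictly decreasing on $\operatorname{supp}\ell$, so that the inverse $\ell^{-1}$ exists on $(0,\|\ell\|_\infty)$ with $\|\ell\|_\infty=\sup_{s>0}\ell(s)$; and (ii) the function $g\colon(0,\|\ell\|_\infty^{1/k})\to\operatorname{supp}\ell$, $g(s)=\ell^{-1}(s^k)$, is log-concave (i.e. $\log g$ is concave). *)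

(* Defs.v *)
From HB Require Import structures.
From mathcomp Require Import all_boot all_order all_algebra.
From mathcomp Require Import all_classical all_reals all_analysis.
Set Implicit Arguments. Unset Strict Implicit. Unset Printing Implicit Defensive.
Import Order.TTheory GRing.Theory Num.Theory.
Import numFieldNormedType.Exports.
Local Open Scope classical_set_scope.
Local Open Scope ring_scope.

(* ell : (0,oo) -> [0,oo) is modelled as a function R -> R of which only
   the values at t > 0 matter. *)

(* sup { t > 0 : ell t > 0 }, in the extended reals (may be +oo, or -oo
   for the empty set). *)
Definition supp_bound (R : realType) (l : R -> R) : \bar R :=
  ereal_sup ((fun s : R => s%:E) @` [set s | 0 < s /\ 0 < l s]).

Definition supp_of (R : realType) (l : R -> R) : set R :=
  [set t | 0 < t /\ (t%:E < supp_bound l)%E].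

Definition sup_norm (R : realType) (l : R -> R) : \bar R :=
  ereal_sup ((fun s : R => (l s)%:E) @` [set s | 0 < s]).

(* Domain (0, ||ell||_oo^{1/k}) of g; for s > 0 and k >= 1,
   s < ||ell||_oo^{1/k}  iff  s^k < ||ell||_oo. *)
Definition g_dom (R : realType) (k : nat) (l : R -> R) : set R :=
  [set s | 0 < s /\ ((s ^+ k)%:E < sup_norm l)%E].

(* Condition (ii): the function
   g(s) = ell^{-1}(s^k) : g_dom -> supp ell exists (i.e. ell^{-1}(s^k) is
   defined for all s in the domain) and log g is concave.  Since ell is
   strictly decreasing (hence injective) on supp ell, such g is unique on
   g_dom, so the existential quantifier names exactly ell^{-1}(s^k). *)
Definition in_Lambda (R : realType) (k : nat) (l : R -> R) : Prop :=
  [/\ (forall t, 0 < t -> 0 <= l t),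
      (forall t, 0 < t -> {for t, continuous l}),
      (forall s t, supp_of l s -> supp_of l t -> s < t -> l t < l s) &
      exists g : R -> R,
        (forall s, g_dom k l s -> supp_of l (g s) /\ l (g s) = s ^+ k) /\
        (forall x y a, g_dom k l x -> g_dom k l y -> 0 <= a -> a <= 1 ->
           a * ln (g x) + (1 - a) * ln (g y)
             <= ln (g (a * x + (1 - a) * y)))].

Definition psi (R : realType) (k : nat) (l : R -> R) (t : R) : R :=
  t * (derive1 l t) / (l t) `^ (1 - k%:R^-1).

(* Main.v *)
Require Import Defs.
From HB Require Import structures.
From mathcomp Require Import all_boot all_order all_algebra.
From mathcomp Require Import all_classical all_reals all_analysis.
From mathcomp Require Import ring lra.
Import Order.TTheory GRing.Theory Num.Theory.
Import numFieldNormedType.Exports.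
Local Open Scope classical_set_scope.
Local Open Scope ring_scope.
Set Implicit Arguments. Unset Strict Implicit.

Section Main.
Context (R : realType) (k : nat) (l : R -> R).
Hypothesis k0 : (0 < k)%N.
Hypothesis l0 : forall t, 0 < t -> 0 <= l t.
Hypothesis lc : forall t, 0 < t -> {for t, continuous l}.
Hypothesis ld : forall t, supp_of l t ->
     [/\ derivable l t 1, {for t, continuous (derive1 l)} & derive1 l t < 0].

Local Notation P := (supp_of l).

Lemma ld_is t : P t -> is_derive t 1 l (derive1 l t).
Proof. by case/ld => d _ _; rewrite derive1E; exact: derivableP. Qed.

Lemma cont_within a b : 0 < a -> {within `[a, b], continuous l}.
Proof.
move=> a0; apply: continuous_in_subspaceT => x; rewrite inE /= in_itv /= => /andP[ax _].
by apply: lc; exact: (lt_le_trans a0 ax).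
Qed.

Lemma P_conv s t x : P s -> P t -> s <= x -> x <= t -> P x.
Proof.
case=> s0 _ [t0 tb] sx xt; split; first exact: lt_le_trans sx.
by apply: le_lt_trans tb; rewrite lee_fin.
Qed.

Lemma l_decr s t : P s -> s < t -> (t%:E <= supp_bound l)%E -> l t < l s.
Proof.
move=> Ps st tb; have s0 : 0 < s by case: Ps.
have Px x : x \in `]s, t[ -> P x.
  rewrite in_itv /= => /andP[sx xt]; split; first exact: lt_trans sx.
  by apply: lt_le_trans tb; rewrite lte_fin.
have [c cI E] := MVT st (fun x xI => ld_is (Px x xI)) (@cont_within s t s0).
have [_ _ dc] := ld (Px c cI).
have : derive1 l c * (t - s) < 0 by rewrite nmulr_rlt0 // subr_gt0.
rewrite -E; lra.
Qed.

Lemma P_pos t : P t -> 0 < l t.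
Proof.
move=> Pt; have [t0 tb] := Pt.
have [_ [s [s0 ls0] <-] ts] := ereal_sup_gt tb.
rewrite lte_fin in ts.
apply: (lt_trans ls0); apply: (l_decr Pt ts).
rewrite /supp_bound; apply: ereal_sup_ubound => /=. exists s => //.
Qed.

Lemma pos_P t : 0 < t -> 0 < l t -> P t.
Proof.
move=> t0 lt0; split => //.
have := lc t0; move/cvgrPdist_lt => /(_ _ lt0); case/nbhs_ballP => d /= d0 H.
have Hx : ball t d (t + d / 2).
  rewrite /ball /=; have -> : t - (t + d / 2) = - (d / 2) by ring.
  rewrite normrN gtr0_norm; lra.
have := H _ Hx; rewrite /= => H2.
have lx : 0 < l (t + d / 2).
  move: H2; rewrite ltr_norml; lra.
apply: (@lt_le_trans _ _ (t + d / 2)%:E); first by rewrite lte_fin; lra.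
rewrite /supp_bound; apply: ereal_sup_ubound; exists (t + d / 2) => //; split => //; lra.
Qed.

Definition B (t : R) : R := l t `^ (k%:R^-1).
Definition dB (t : R) : R := (k%:R^-1 * (l t) `^ (k%:R^-1 - 1)) * derive1 l t.

Lemma kpos : 0 < (k%:R : R). Proof. by rewrite ltr0n. Qed.

Lemma B_derive t : P t -> is_derive t 1 B (dB t).
Proof.
move=> Pt; have lp := P_pos Pt.
have H := @is_derive1_comp _ (fun x : R => x `^ k%:R^-1) l t _ _ (is_derive1_powR k%:R^-1 lp) (ld_is Pt).
exact: H.
Qed.

Lemma B_decr a c : P a -> P c -> a < c -> B c < B a.
Proof.
move=> Pa Pc ac; rewrite /B.
have kinv : 0 < (k%:R : R)^-1 by rewrite invr_gt0 kpos.
apply: (gt0_ltr_powR kinv); rewrite ?nnegrE; try exact: ltW (P_pos _).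
by apply: l_decr => //; case: Pc => _ /ltW.
Qed.

Lemma dB_psi t : P t -> t^-1 / dB t = k%:R / psi k l t.
Proof.
move=> Pt; have lp := P_pos Pt; have [_ _ dn] := ld Pt.
have t0 : 0 < t by case: Pt.
rewrite /dB /psi.
have -> : (k%:R^-1 - 1 : R) = - (1 - k%:R^-1) by ring.
rewrite powRN.
have q0 : 0 < l t `^ (1 - k%:R^-1) by apply: powR_gt0.
have kp := kpos.
field; by rewrite (gt_eqF q0) (lt_eqF dn) (gt_eqF t0) (gt_eqF kp).
Qed.

Lemma chord a c : P a -> P c -> a < c ->
  exists2 tau, tau \in `]a, c[ & ln c - ln a = (k%:R / psi k l tau) * (B c - B a).
Proof.
move=> Pa Pc ac.
have PI x : x \in `[a, c] -> P x.
  by rewrite in_itv /= => /andP[ax xc]; exact: (P_conv Pa Pc ax xc).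
have PO x : x \in `]a, c[ -> P x.
  by rewrite in_itv /= => /andP[ax xc]; exact: (P_conv Pa Pc (ltW ax) (ltW xc)).
have cf : {within `[a, c], continuous (@ln R)}.
  apply: continuous_in_subspaceT => x; rewrite inE => /PI [x0 _].
  exact: continuous_ln.
have cg : {within `[a, c], continuous B}.
  apply: continuous_in_subspaceT => x; rewrite inE => /PI Px.
  apply: differentiable_continuous; apply/derivable1_diffP.
  by case: (B_derive Px).
have fdf x : x \in `]a, c[ -> is_derive x 1 (@ln R) x^-1.
  by move=> /PO [x0 _]; exact: is_derive1_ln.
have gdg x : x \in `]a, c[ -> is_derive x 1 B (dB x).
  by move=> /PO Px; exact: B_derive.
have dg0 x : x \in `]a, c[ -> dB x != 0.
  move=> /PO Px; have lp := P_pos Px; have [_ _ dn] := ld Px.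
  have kv : 0 < (k%:R : R)^-1 by rewrite invr_gt0 kpos.
  have pw : 0 < l x `^ (k%:R^-1 - 1) by apply: powR_gt0.
  by rewrite /dB !mulf_neq0 // ?(lt_eqF dn) ?(gt_eqF kv) ?(gt_eqF pw).
have [tau tI E] := cauchy_MVT ac cf cg fdf gdg dg0.
exists tau => //; rewrite -(dB_psi (PO _ tI)) E.
have : B c < B a := B_decr Pa Pc ac.
move=> h; field; rewrite subr_eq0 lt_eqF //.
Qed.

Lemma negdiv (c p1 p2 : R) : 0 < c -> p1 <= p2 -> p2 < 0 -> c / p2 <= c / p1.
Proof.
move=> c0 h p2n; have p1n : p1 < 0 by exact: le_lt_trans h p2n.
have E : p2^-1 - p1^-1 = p1^-1 * p2^-1 * (p1 - p2) by field; rewrite ?lt_eqF.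
have i1 : p1^-1 < 0 by rewrite invr_lt0.
have i2 : p2^-1 < 0 by rewrite invr_lt0.
have : p1^-1 * p2^-1 * (p1 - p2) <= 0.
  by apply: mulr_ge0_le0; [apply: ltW; nra|rewrite subr_le0].
rewrite -E => H; rewrite ler_pM2l //; lra.
Qed.

Lemma negdiv_lt (c p1 p2 : R) : 0 < c -> p1 < p2 -> p2 < 0 -> c / p2 < c / p1.
Proof.
move=> c0 h p2n; have p1n : p1 < 0 by exact: lt_trans h p2n.
have E : p2^-1 - p1^-1 = p1^-1 * p2^-1 * (p1 - p2) by field; rewrite ?lt_eqF.
have i1 : p1^-1 < 0 by rewrite invr_lt0.
have i2 : p2^-1 < 0 by rewrite invr_lt0.
have : p1^-1 * p2^-1 * (p1 - p2) < 0.
  have : p1 - p2 < 0 by rewrite subr_lt0.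
  have q : 0 < p1^-1 * p2^-1 by nra.
  nra.
rewrite -E => H; rewrite ltr_pM2l //; lra.
Qed.

Lemma psi_neg t : P t -> psi k l t < 0.
Proof.
move=> Pt; have lp := P_pos Pt; have [_ _ dn] := ld Pt; have [t0 _] := Pt.
rewrite /psi ltr_pdivrMr ?powR_gt0 // mul0r; nra.
Qed.

Lemma e_ge0 : 0 <= (1 - (k%:R : R)^-1).
Proof.
have k1 : 1 <= (k%:R : R) by rewrite ler1n.
by rewrite subr_ge0 invf_le1 // kpos.
Qed.

Lemma tail (Hpsi : forall s t, P s -> P t -> s <= t -> psi k l t <= psi k l s)
  u y : P u -> 0 < y -> exists t, [/\ P t, u <= t & l t < y].
Proof.
move=> Pu y0; have [u0 ub] := Pu.
case E: (supp_bound l) ub => [r| |] ub.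
- rewrite lte_fin in ub.
  have r0 : 0 < r by exact: lt_trans ub.
  have lr : l r = 0.
    apply/eqP; rewrite eq_le l0 // andbT leNgt; apply/negP => h.
    by have [_] := pos_P r0 h; rewrite E ltxx.
  have := lc r0; move/cvgrPdist_lt => /(_ _ y0); case/nbhs_ballP => d /= d0 H.
  have [e [e0 ed eu]] : exists e, [/\ 0 < e, e < d & e <= (r - u) / 2].
    have [h|h] := leP (d / 2) ((r - u) / 2).
    + by exists (d / 2); split => //; lra.
    + by exists ((r - u) / 2); split => //; lra.
  exists (r - e); split; [|lra|].
  + split; first lra.
    by rewrite E lte_fin; lra.
  + have Hb : ball r d (r - e).
      rewrite /ball /=; have -> : r - (r - e) = e by ring.
      by rewrite gtr0_norm.
    move/H: Hb => /=; rewrite lr sub0r normrN => h.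
    exact: le_lt_trans (ler_norm _) h.
- have [//|N] := pselect (exists t, [/\ P t, u <= t & l t < y]).
  exfalso.
  have PP t : u <= t -> P t.
    by move=> ut; split; [exact: lt_le_trans ut|rewrite E ltry].
  have Hy t : u <= t -> y <= l t.
    move=> ut; rewrite leNgt; apply/negP => h; apply: N; exists t; split => //.
    exact: PP.
  pose p := psi k l u.
  have pn : p < 0 by exact: psi_neg.
  pose e := 1 - (k%:R : R)^-1.
  have e0 : 0 <= e by exact: e_ge0.
  pose c := - p * y `^ e.
  have ye : 0 < y `^ e by apply: powR_gt0.
  have c0 : 0 < c by rewrite /c; nra.
  have key t : u <= t -> t * derive1 l t <= - c.
    move=> ut; have Pt := PP t ut; have lt := P_pos Pt.
    have := Hpsi u t Pu Pt ut; rewrite -/p /psi ler_pdivrMr ?powR_gt0 // => h.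
    have : y `^ e <= l t `^ e.
      by apply: ge0_ler_powR => //; rewrite ?nnegrE; [exact: ltW|exact: ltW|exact: Hy].
    rewrite /c; nra.
  have lu := P_pos Pu.
  pose T := u * expR (l u / c).
  have uT : u < T.
    rewrite /T; have : 1 < expR (l u / c) by rewrite expR_gt1 divr_gt0.
    nra.
  pose h := l + c \*: (@ln R).
  pose dh := fun x => derive1 l x + c *: x^-1.
  have hD x : u <= x -> is_derive x 1 h (dh x).
    move=> ux; have Px := PP x ux; have [x0 _] := Px.
    apply: is_deriveD; first exact: ld_is.
    exact: is_deriveZ (is_derive1_ln x0).
  have hc : {within `[u, T], continuous h}.
    apply: continuous_in_subspaceT => x; rewrite inE /= in_itv /= => /andP[ux _].
    apply: differentiable_continuous; apply/derivable1_diffP.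
    by case: (hD x ux).
  have uI x : x \in `]u, T[ -> u <= x.
    by rewrite in_itv /= => /andP[ux _]; exact: ltW.
  have [xi xI Ex] := MVT uT (fun x xI => hD x (uI x xI)) hc.
  have uxi : u < xi by move: xI; rewrite in_itv /= => /andP[].
  have xi0 : 0 < xi by exact: lt_trans uxi.
  have : xi * dh xi <= 0.
    rewrite /dh mulrDr; have := key xi (ltW uxi).
    rewrite /GRing.scale /= mulrCA mulfV ?gt_eqF // mulr1; lra.
  rewrite pmulr_rle0 // => dh0.
  have : h T - h u <= 0 by rewrite Ex; nra.
  change (l T + c * ln T - (l u + c * ln u) <= 0 -> False).
  rewrite /T lnM ?posrE ?expR_gt0 // expRK.
  have -> : c * (ln u + l u / c) = c * ln u + l u by field; rewrite gt_eqF.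
  have := Hy T (ltW uT); lra.
- by rewrite ltNge leNye in ub.
Qed.

Lemma surj (Hpsi : forall s t, P s -> P t -> s <= t -> psi k l t <= psi k l s)
  y : 0 < y -> (y%:E < sup_norm l)%E -> exists t, P t /\ l t = y.
Proof.
move=> y0 ys.
have [_ [u u0 <-] yu] := ereal_sup_gt ys.
rewrite lte_fin in yu.
have Pu : P u by apply: pos_P => //; exact: lt_trans yu.
have [t [Pt ut lty]] := tail Hpsi Pu y0.
have hm : Num.min (l u) (l t) <= y <= Num.max (l u) (l t).
  by rewrite ge_min le_max (ltW lty) (ltW yu) orbT.
have [c cI lc'] := IVT ut (@cont_within u t u0) hm.
exists c; split => //.
by move: cI; rewrite in_itv /= => /andP[uc ct]; exact: (P_conv Pu Pt uc ct).
Qed.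

Lemma BK (s : R) : 0 < s -> (s ^+ k) `^ (k%:R^-1) = s.
Proof.
move=> s0; rewrite -(@powR_mulrn R s k) ?ltW // -powRrM mulfV ?gt_eqF ?kpos //.
by rewrite powRr1 // ltW.
Qed.

Lemma BKk t : P t -> B t ^+ k = l t.
Proof.
move=> Pt; have lp := P_pos Pt.
rewrite /B -(@powR_mulrn R _ k) ?powR_ge0 // -powRrM mulVf ?gt_eqF ?kpos //.
by rewrite powRr1 // ltW.
Qed.

Lemma conc_alg (Fx Fy Fz x y z a p1 p2 : R) : 0 < a -> a < 1 ->
  z = a * x + (1 - a) * y -> x < y -> Fz - Fx = p1 * (z - x) ->
  Fy - Fz = p2 * (y - z) -> p2 <= p1 -> a * Fx + (1 - a) * Fy <= Fz.
Proof.
move=> a0 a1 Ez xy E1 E2 p21.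
have -> : Fx = Fz - p1 * (z - x) by lra.
have -> : Fy = Fz + p2 * (y - z) by lra.
rewrite Ez.
have H : 0 <= a * (1 - a) * (y - x) * (p1 - p2).
  apply: mulr_ge0; last by lra.
  apply: mulr_ge0; last by lra.
  apply: mulr_ge0; lra.
nra.
Qed.

Theorem dir1 (Hpsi : forall s t, P s -> P t -> s <= t -> psi k l t <= psi k l s) :
  in_Lambda k l.
Proof.
split => //.
  by move=> s t Ps Pt st; apply: l_decr => //; case: Pt => _ /ltW.
have H : forall s, exists t, g_dom k l s -> P t /\ l t = s ^+ k.
  move=> s; have [[s0 sk]|n] := pselect (g_dom k l s).
    have [t Ht] := surj Hpsi (exprn_gt0 k s0) sk.
    by exists t => _.
  by exists 0 => /n.
have [g Hg] := choice H.
exists g; split; first by move=> s /Hg.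
have gB s : g_dom k l s -> B (g s) = s.
  move=> gs; have [Pg lg] := Hg s gs; rewrite /B lg BK //; by case: gs.
have gdec x y : g_dom k l x -> g_dom k l y -> x < y -> g y < g x.
  move=> gx gy xy; have [Px lx] := Hg x gx; have [Py ly] := Hg y gy.
  have x0 : 0 < x by case: gx.
  have : x ^+ k < y ^+ k by rewrite ltrXn2r ?(ltW x0) // -lt0n.
  rewrite -lx -ly => h; case: (ltgtP (g y) (g x)) => // [gxy|e].
    have := l_decr Px gxy (ltW Py.2); lra.
  by move: h; rewrite e ltxx.
have chs x y : g_dom k l x -> g_dom k l y -> x < y ->
    exists2 tau, g y < tau < g x & ln (g y) - ln (g x) = k%:R / psi k l tau * (y - x).
  move=> gx gy xy.
  have [tau tI E] := chord (Hg y gy).1 (Hg x gx).1 (gdec x y gx gy xy).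
  rewrite !gB // in E; exists tau; first by move: tI; rewrite in_itv.
  have -> : y - x = - (x - y) by ring.
  by rewrite mulrN -E; ring.
have gdconv x y a : g_dom k l x -> g_dom k l y -> 0 <= a -> a <= 1 -> x <= y ->
    g_dom k l (a * x + (1 - a) * y).
  move=> [x0 xs] [y0 ys] a0 a1 xy.
  have h1 : x <= a * x + (1 - a) * y by nra.
  have h2 : a * x + (1 - a) * y <= y by nra.
  split; first exact: lt_le_trans h1.
  apply: le_lt_trans ys; rewrite lee_fin lerXn2r // nnegrE; [lra|lra].
have conc_lt x y a : g_dom k l x -> g_dom k l y -> x < y -> 0 < a -> a < 1 ->
    a * ln (g x) + (1 - a) * ln (g y) <= ln (g (a * x + (1 - a) * y)).
  move=> gx gy xy a0 a1.
  have gz := gdconv x y a gx gy (ltW a0) (ltW a1) (ltW xy).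
  set z := a * x + (1 - a) * y in gz *.
  have xz : x < z by rewrite /z; nra.
  have zy : z < y by rewrite /z; nra.
  have [t1 /andP[t1a t1b] E1] := chs x z gx gz xz.
  have [t2 /andP[t2a t2b] E2] := chs z y gz gy zy.
  have P1 : P t1 := P_conv (Hg z gz).1 (Hg x gx).1 (ltW t1a) (ltW t1b).
  have P2 : P t2 := P_conv (Hg y gy).1 (Hg z gz).1 (ltW t2a) (ltW t2b).
  have h := Hpsi t2 t1 P2 P1 (ltW (lt_trans t2b t1a)).
  have hh := negdiv kpos h (psi_neg P2).
  exact: (conc_alg a0 a1 (erefl z) xy E1 E2 hh).
move=> x y a gx gy a0 a1.
have [->|an0] := eqVneq a 0.
  by rewrite !mul0r !add0r !subr0 !mul1r.
have [->|an1] := eqVneq a 1.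
  by rewrite subrr !mul0r !addr0 !mul1r.
have a0' : 0 < a by rewrite lt_neqAle eq_sym an0 a0.
have a1' : a < 1 by rewrite lt_neqAle an1 a1.
case: (ltgtP x y) => [xy|yx|<-].
- exact: conc_lt.
- have := conc_lt y x (1 - a) gy gx yx ltac:(lra) ltac:(lra).
  have -> : 1 - (1 - a) = a by ring.
  by rewrite addrC (addrC ((1 - a) * y)).
- set F := ln (g x).
  have -> : a * x + (1 - a) * x = x by ring.
  have -> : a * F + (1 - a) * F = F by ring.
  by [].
Qed.

Lemma psi_cont t : P t -> {for t, continuous (psi k l)}.
Proof.
move=> Pt; have lp := P_pos Pt; have [_ dc _] := ld Pt; have [t0 _] := Pt.
have pc : {for t, continuous (fun x => l x `^ (1 - k%:R^-1))}.
  apply: (@continuous_comp _ _ _ l (fun y => y `^ (1 - k%:R^-1))); first exact: lc.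
  apply: differentiable_continuous; apply/derivable1_diffP.
  by case: (is_derive1_powR (1 - k%:R^-1) lp).
have q0 : l t `^ (1 - k%:R^-1) != 0 by rewrite gt_eqF // powR_gt0.
apply: (@cvgM _ _ _ _ (fun x => x * derive1 l x) (fun x => (l x `^ (1 - k%:R^-1))^-1)).
  by apply: cvgM; [exact: cvg_id|exact: dc].
exact: cvgV.
Qed.

Lemma Pdown x y : P y -> 0 < x -> x <= y -> P x.
Proof.
case=> _ yb x0 xy; split => //; apply: le_lt_trans yb; by rewrite lee_fin.
Qed.

Theorem dir2 : in_Lambda k l ->
  forall s t, P s -> P t -> s <= t -> psi k l t <= psi k l s.
Proof.
case=> _ _ _ [g [Hg Hc]] s t Ps Pt.
have gB x : P x -> g_dom k l (B x) /\ g (B x) = x.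
  move=> Px; have lp := P_pos Px; have [x0 xb] := Px.
  have Bp : 0 < B x by apply: powR_gt0.
  have gd : g_dom k l (B x).
    split => //; rewrite BKk //.
    have Ph : P (x / 2) by apply: (Pdown Px); lra.
    have := l_decr Ph (_ : x / 2 < x) (ltW xb).
    move=> /(_ ltac:(lra)) hl.
    apply: (@lt_le_trans _ _ (l (x / 2))%:E); first by rewrite lte_fin.
    rewrite /sup_norm; apply: ereal_sup_ubound; exists (x / 2) => //=; lra.
  split => //; have [Pg lg] := Hg _ gd; rewrite BKk // in lg.
  case: (ltgtP (g (B x)) x) => // [h|h].
    by have := l_decr Pg h (ltW xb); rewrite lg ltxx.
  by have := l_decr Px h (ltW Pg.2); rewrite lg ltxx.
have c3 x z y : g_dom k l x -> g_dom k l y -> x < z -> z < y ->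
    (y - z) * ln (g x) + (z - x) * ln (g y) <= (y - x) * ln (g z).
  move=> gx gy xz zy.
  have yx : 0 < y - x by lra.
  pose a := (y - z) / (y - x).
  have a0 : 0 <= a by rewrite /a divr_ge0 //; lra.
  have a1 : a <= 1 by rewrite /a ler_pdivrMr // mul1r; lra.
  have Ez : a * x + (1 - a) * y = z by rewrite /a; field; rewrite gt_eqF.
  have := Hc x y a gx gy a0 a1; rewrite Ez => h.
  have <- : (y - x) * (a * ln (g x) + (1 - a) * ln (g y)) =
            (y - z) * ln (g x) + (z - x) * ln (g y).
    by rewrite /a; field; rewrite gt_eqF.
  by rewrite ler_pM2l.
rewrite le_eqVlt => /orP[/eqP ->|st]; first exact: lexx.
rewrite leNgt; apply/negP => hps.
pose e := (psi k l t - psi k l s) / 2.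
have e0 : 0 < e by rewrite /e; lra.
have := psi_cont Ps; move/cvgrPdist_lt => /(_ _ e0); case/nbhs_ballP => ds /= ds0 Hs.
have := psi_cont Pt; move/cvgrPdist_lt => /(_ _ e0); case/nbhs_ballP => dt /= dt0 Ht.
have [s0 _] := Ps.
have [m [m0 m1 m2 m3 m4]] : exists m, [/\ 0 < m, m <= ds, m <= dt, m <= s & m <= t - s].
  exists (Num.min (Num.min ds dt) (Num.min s (t - s))).
  rewrite !lt_min ds0 dt0 s0 subr_gt0 st; split => //;
    by rewrite !ge_min ?lexx ?orbT.
pose d := m / 2.
have Ps' : P (s - d) by apply: (Pdown Ps); rewrite /d; lra.
have Pt' : P (t - d) by apply: (Pdown Pt); rewrite /d; lra.
have [t1 t1I E1] := chord Ps' Ps ltac:(rewrite /d; lra).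
have [t2 t2I E2] := chord Pt' Pt ltac:(rewrite /d; lra).
move: t1I t2I; rewrite !in_itv /= => /andP[t1a t1b] /andP[t2a t2b].
have P1 : P t1 := P_conv Ps' Ps (ltW t1a) (ltW t1b).
have P2 : P t2 := P_conv Pt' Pt (ltW t2a) (ltW t2b).
have h1 : psi k l t1 < psi k l s + e.
  have : ball s ds t1.
    rewrite /ball /= gtr0_norm; rewrite /d in t1a; lra.
  move/Hs => /= hb; have := ler_norm (psi k l s - psi k l t1).
  rewrite distrC in hb; have := ler_norm (psi k l t1 - psi k l s); lra.
have h2 : psi k l t - e < psi k l t2.
  have : ball t dt t2.
    rewrite /ball /= gtr0_norm; rewrite /d in t2a; lra.
  move/Ht => /= hb; have := ler_norm (psi k l t - psi k l t2); lra.
have h12 : psi k l t1 < psi k l t2 by rewrite /e in h1 h2; lra.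
have hm := negdiv_lt kpos h12 (psi_neg P2).
have b1 := B_decr Pt' Pt ltac:(rewrite /d; lra).
have b2 := B_decr Ps Pt' ltac:(rewrite /d; lra).
have b3 := B_decr Ps' Ps ltac:(rewrite /d; lra).
have [gt gtE] := gB t Pt.
have [gt' gt'E] := gB _ Pt'.
have [gs gsE] := gB s Ps.
have [gs' gs'E] := gB _ Ps'.
have c3a := c3 _ _ _ gt gs' b1 (lt_trans b2 b3).
have c3b := c3 _ _ _ gt' gs' b2 b3.
rewrite gtE gt'E gs'E in c3a; rewrite gt'E gsE gs'E in c3b.
set n1 := k%:R / psi k l t1 in E1 hm.
set n2 := k%:R / psi k l t2 in E2 hm.
set a3 := B t in E2 c3a b1.
set a4 := B (t - d) in E2 c3a c3b b1 b2.
set a1 := B s in E1 c3b b2 b3.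
set a2 := B (s - d) in E1 c3a c3b b3.
have L3 : ln t = ln (t - d) + n2 * (a3 - a4) by lra.
have L1 : ln s = ln (s - d) + n1 * (a1 - a2) by lra.
rewrite L3 in c3a; rewrite L1 in c3b.
have H1 : (a4 - a3) * (ln (s - d) - ln (t - d) - n2 * (a2 - a4)) <= 0 by lra.
have H2 : (a2 - a1) * (ln (t - d) - ln (s - d) + n1 * (a2 - a4)) <= 0 by lra.
rewrite pmulr_rle0 in H1; last lra.
rewrite pmulr_rle0 in H2; last lra.
have H3 : n1 * (a2 - a4) <= n2 * (a2 - a4) by lra.
rewrite ler_pM2r in H3; last lra.
lra.
Qed.
End Main.

Unset Implicit Arguments.
Set Strict Implicit.

Theorem mainTheorem9 (R : realType) (k : nat) (l : R -> R) :
  (0 < k)%N ->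
  (forall t, 0 < t -> 0 <= l t) ->
  (forall t, 0 < t -> {for t, continuous l}) ->
  (forall t, supp_of l t ->
     [/\ derivable l t 1, {for t, continuous (derive1 l)} & derive1 l t < 0]) ->
  (in_Lambda k l <->
   (forall s t, supp_of l s -> supp_of l t -> s <= t -> psi k l t <= psi k l s)).
Proof.
move=> k0 l0 lc ld; split.
- by move=> H; apply: dir2.
- by move=> H; apply: dir1.
Qed.
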